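(* Let $p$ be a prime, let $h \in \mathbb{Z}$, and let $q \in \mathbb{C}_p$ with $|1-q|_p < p^{-\frac{1}{p-1}}$. Then for every integer $n \geq 0$ and every $x \in \mathbb{Z}_p$, $$\lim_{N\to\infty} \frac{1}{p^N}\sum_{y=0}^{p^N-1} q^{hy}\, y^n = B_{n,q}^{(h)}, \qquad \lim_{N\to\infty} \frac{1}{p^N}\sum_{y=0}^{p^N-1} q^{hy}\,(x+y)^n = B_{n,q}^{(h)}(x).$$ That is, $\int_{\mathbb{Z}_p} q^{hy} y^n\, d\mu_1(y) = B_{n,q}^{(h)}$ and $\int_{\mathbb{Z}_p} q^{hy}(x+y)^n\, d\mu_1(y) = B_{n,q}^{(h)}(x)$.
   Context: $\mathbb{Z}_p$, $\mathbb{C}_p$ denote the $p$-adic integers and the completion of an algebraic closure of $\mathbb{Q}_p$, with absolute value normalized by $|p|_p = p^{-1}$. For $q\in\mathbb{C}_p$ with $|1-q|_p<p^{-1/(p-1)}$, $q^x := \exp(x\log q)$ for $x\in\mathbb{Z}_p$. For a uniformly differentiable $f:\mathbb{Z}_p\to\mathbb{C}_p$, the Volkenborn integral is $\int_{\mathbb{Z}_p} f(x)\,d\mu_1(x) := \lim_{N\to\infty} p^{-N}\sum_{x=0}^{p^N-1} f(x)$. The $(h,q)$-Bernoulli numbers $B_{n,q}^{(h)}$ and polynomials $B_{n,q}^{(h)}(x)$ are defined by the power series expansions in $t$ $$\frac{h\log q + t}{q^h e^t - 1} = \sum_{n=0}^\infty B_{n,q}^{(h)}\frac{t^n}{n!},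 \qquad \frac{h\log q + t}{q^h e^t - 1}\, e^{xt} = \sum_{n=0}^\infty B_{n,q}^{(h)}(x)\frac{t^n}{n!}.$$ *)

(* Defs.v *)
(* K is an abstract field playing the role of C_p, equipped
   with a non-archimedean absolute value [a : K -> R] into a realType. *)
From HB Require Import structures.
From mathcomp Require Import all_boot all_order all_algebra.
From mathcomp Require Import reals.
From Stdlib Require Import ClassicalEpsilon.
Set Implicit Arguments. Unset Strict Implicit. Unset Printing Implicit Defensive.
Import Order.TTheory GRing.Theory Num.Theory.
Local Open Scope ring_scope.

Section PadicDefs.
Variables (R : realType) (K : fieldType) (a : K -> R).

Definition Kcvg (u : nat -> K) (l : K) : Prop :=
  forall eps : R, 0 < eps -> exists N : nat, forall n, (N <= n)%N -> a (u n - l) < eps.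

Definition Kcauchy (u : nat -> K) : Prop :=
  forall eps : R, 0 < eps -> exists N : nat,
    forall m n, (N <= m)%N -> (N <= n)%N -> a (u m - u n) < eps.

(* the limit of a sequence (an arbitrary value if it does not converge) *)
Definition Klim (u : nat -> K) : K := epsilon (inhabits 0) (fun l => Kcvg u l).

Definition Kseries (c : nat -> K) : K := Klim (fun N => \sum_(k < N) c k).

Definition Kexp (z : K) : K := Kseries (fun k => z ^+ k / (k`!)%:R).
Definition Klog (q : K) : K :=
  Kseries (fun k => (-1) ^+ k * (q - 1) ^+ k.+1 / (k.+1)%:R).

Definition Kqpow (q x : K) : K := Kexp (x * Klog q).

(* x lies in Z_p = the closure of the integers in K *)
Definition in_Zp (x : K) : Prop :=
  exists u : nat -> int, Kcvg (fun n => (u n)%:~R) x.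

End PadicDefs.

(* a : K -> R is a complete non-archimedean absolute value on K with
   |p| = p^-1 (i.e. extending the p-adic absolute value on Q) *)
Definition is_padic_abs (R : realType) (K : fieldType) (p : nat) (a : K -> R) : Prop :=
  (forall x, 0 <= a x) /\
  (forall x, a x = 0 <-> x = 0) /\
  (forall x y, a (x * y) = a x * a y) /\
  (forall x y, a (x + y) <= Num.max (a x) (a y)) /\
  a (p%:R) = (p%:R)^-1 /\
  (forall u : nat -> K, Kcauchy a u -> exists l, Kcvg a u l).

(* formal power series in t, as coefficient sequences, and their product *)
Definition fps_mul (K : fieldType) (f g : nat -> K) : nat -> K :=
  fun n => \sum_(k < n.+1) f k * g (n - k)%N.

(* coefficients of h log q + t *)
Definition bern_num (R : realType) (K : fieldType) (a : K -> R) (q : K) (h : int) : nat -> K :=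
  fun n => if n == 0%N then h%:~R * Klog a q else if n == 1%N then 1 else 0.

(* coefficients of q^h e^t - 1, where q^h = exp(h log q) *)
Definition bern_den (R : realType) (K : fieldType) (a : K -> R) (q : K) (h : int) : nat -> K :=
  fun n => Kqpow a q h%:~R / (n`!)%:R - (if n == 0%N then 1 else 0).

Definition exp_fps (K : fieldType) (x : K) : nat -> K := fun n => x ^+ n / (n`!)%:R.

(* B is the sequence (B_{n,q}^{(h)})_n, i.e.
   (h log q + t)/(q^h e^t - 1) = sum_n B n t^n/n!  in K((t)),
   equivalently (q^h e^t - 1) * sum_n B n t^n/n! = h log q + t. *)
Definition is_hq_bernoulli (R : realType) (K : fieldType) (a : K -> R) (q : K) (h : int)
    (B : nat -> K) : Prop :=
  fps_mul (bern_den a q h) (fun n => B n / (n`!)%:R) =1 bern_num a q h.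

(* B is the sequence (B_{n,q}^{(h)}(x))_n, i.e.
   (h log q + t)/(q^h e^t - 1) e^{xt} = sum_n B n t^n/n!  in K((t)). *)
Definition is_hq_bernoulli_poly (R : realType) (K : fieldType) (a : K -> R) (q : K) (h : int)
    (x : K) (B : nat -> K) : Prop :=
  fps_mul (bern_den a q h) (fun n => B n / (n`!)%:R) =1
  fps_mul (bern_num a q h) (exp_fps x).

(* Main.v *)
Require Import Defs.
From HB Require Import structures.
From mathcomp Require Import all_boot all_order all_algebra.
From mathcomp Require Import reals.
From mathcomp Require Import ring lra.
From Stdlib Require Import ClassicalEpsilon Lia.
From mathcomp Require Import zify.
Set Implicit Arguments. Unset Strict Implicit. Unset Printing Implicit Defensive.
Import Order.TTheory GRing.Theory Num.Theory.
Local Open Scope ring_scope.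

Section Real.
Variable R : realType.

Lemma bernoulli_ineq (t : R) n : 0 <= t -> 1 + n%:R * t <= (1 + t) ^+ n.
Proof.
move=> t0; elim: n => [|n IH]; first by rewrite mul0r addr0 expr0.
rewrite exprS -natr1 mulrDl mul1r.
have h1 : 1 <= (1 + t) ^+ n by apply: exprn_ege1; lra.
nra.
Qed.

Lemma geo_small (s : R) : 0 <= s -> s < 1 -> forall e, 0 < e ->
  exists N : nat, forall n, (N <= n)%N -> s ^+ n < e.
Proof.
move=> s0 s1 e e0.
have [->|sn0] := eqVneq s 0.
  by exists 1%N => n n1; rewrite expr0n; case: n n1 => // n _; rewrite /=.
have sp : 0 < s by rewrite lt0r sn0 s0.
set t := s^-1 - 1.
have tp : 0 < t by rewrite /t subr_gt0 invf_gt1.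
have hb : 0 <= (e * t)^-1 by rewrite invr_ge0 ltW // mulr_gt0.
exists (Num.Def.archi_bound (e * t)^-1).
move=> n hn.
have h1 := archi_boundP hb.
have h2 : (Num.Def.archi_bound (e * t)^-1)%:R <= n%:R :> R by rewrite ler_nat.
have h3 := bernoulli_ineq n (ltW tp).
have h4 : 1 + t = s^-1 by rewrite /t; ring.
rewrite h4 in h3.
have h5 : e^-1 < n%:R * t.
  have h6 : (e * t)^-1 < n%:R by apply: lt_le_trans h1 h2.
  rewrite invfM in h6.
  have := ltr_pM2r tp; move=> /(_ (e^-1 * t^-1) n%:R); rewrite h6 => /esym.
  by rewrite -mulrA mulVf ?mulr1 // gt_eqF.
have hy : e^-1 < s^-1 ^+ n by lra.
have ey : 0 < e^-1 by rewrite invr_gt0.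
rewrite exprVn in hy.
by rewrite -ltf_pV2 ?posrE ?exprn_gt0.
Qed.
End Real.

Section Abs.
Variables (R : realType) (K : fieldType) (a : K -> R) (p : nat).
Hypothesis Hp : prime p.
Hypothesis Ha : is_padic_abs p a.

Lemma a_ge0 x : 0 <= a x. Proof. by case: Ha. Qed.
Lemma a_eq0 x : a x = 0 <-> x = 0. Proof. by case: Ha => _ []. Qed.
Lemma aM x y : a (x * y) = a x * a y. Proof. by case: Ha => _ [] _ []. Qed.
Lemma aD x y : a (x + y) <= Num.max (a x) (a y). Proof. by case: Ha => _ [] _ [] _ []. Qed.
Lemma ap : a p%:R = (p%:R)^-1. Proof. by case: Ha => _ [] _ [] _ [] _ []. Qed.
Lemma acomplete (u : nat -> K) : Kcauchy a u -> exists l, Kcvg a u l.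
Proof. by case: Ha => _ [] _ [] _ [] _ [] _ H; apply: H. Qed.

Lemma a0 : a 0 = 0. Proof. by apply/a_eq0. Qed.
Lemma a1 : a 1 = 1.
Proof.
have h : a 1 = a 1 * a 1 by rewrite -aM mulr1.
have h1 : a 1 != 0 by apply/eqP => /a_eq0 /eqP; rewrite oner_eq0.
by apply: (mulfI h1); rewrite mulr1 -h.
Qed.
Lemma aN1 : a (-1) = 1.
Proof.
have h : a (-1) * a (-1) = 1 by rewrite -aM mulrNN mulr1 a1.
have := a_ge0 (-1); nra.
Qed.
Lemma aN x : a (- x) = a x.
Proof. by rewrite -mulN1r aM aN1 mul1r. Qed.
Lemma aBC x y : a (x - y) = a (y - x).
Proof. by rewrite -aN opprB. Qed.
Lemma aDle x y b : a x <= b -> a y <= b -> a (x + y) <= b.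
Proof. move=> h1 h2; apply: le_trans (aD x y) _; by rewrite ge_max h1 h2. Qed.
Lemma aDlt x y b : a x < b -> a y < b -> a (x + y) < b.
Proof. move=> h1 h2; apply: le_lt_trans (aD x y) _; by rewrite gt_max h1 h2. Qed.
Lemma aBle x y b : a x <= b -> a y <= b -> a (x - y) <= b.
Proof. by move=> h1 h2; apply: aDle; rewrite ?aN. Qed.
Lemma aBlt x y b : a x < b -> a y < b -> a (x - y) < b.
Proof. by move=> h1 h2; apply: aDlt; rewrite ?aN. Qed.
Lemma aX x n : a (x ^+ n) = a x ^+ n.
Proof. elim: n => [|n IH]; by rewrite ?expr0 ?a1 // !exprS aM IH. Qed.
Lemma aV x : a (x^-1) = (a x)^-1.
Proof.
have [->|x0] := eqVneq x 0; first by rewrite invr0 a0 invr0.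
have h : a x * a x^-1 = 1 by rewrite -aM mulfV // a1.
have hx : a x != 0 by apply/eqP => /a_eq0 /eqP; rewrite (negPf x0).
by apply: (mulfI hx); rewrite h mulfV.
Qed.

Lemma asum_le (I : Type) (r : seq I) (P : pred I) (F : I -> K) b :
  0 <= b -> (forall i, P i -> a (F i) <= b) -> a (\sum_(i <- r | P i) F i) <= b.
Proof.
move=> b0 h; apply: (big_ind (fun x => a x <= b)) => //; first by rewrite a0.
by move=> x y; apply: aDle.
Qed.
Lemma asum_lt (I : Type) (r : seq I) (P : pred I) (F : I -> K) b :
  0 < b -> (forall i, P i -> a (F i) < b) -> a (\sum_(i <- r | P i) F i) < b.
Proof.
move=> b0 h; apply: (big_ind (fun x => a x < b)) => //; first by rewrite a0.
by move=> x y; apply: aDlt.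
Qed.

Lemma p_gt1 : (1 < p)%N. Proof. exact: prime_gt1. Qed.
Lemma pm1_gt0 : (0 < p.-1)%N. Proof. by have := p_gt1; case: p => // [[]]. Qed.
Lemma pR_gt1 : 1 < p%:R :> R. Proof. by rewrite ltr1n p_gt1. Qed.
Lemma pR_gt0 : 0 < p%:R :> R. Proof. by have := pR_gt1; lra. Qed.

Lemma anat n : a n%:R <= 1.
Proof.
elim: n => [|n IH]; first by rewrite a0.
by rewrite -natr1; apply: aDle; rewrite ?a1.
Qed.

Lemma a_intr (z : int) : a z%:~R <= 1.
Proof.
case: z => n; first by rewrite -pmulrn anat.
by rewrite NegzE mulrNz aN -pmulrn anat.
Qed.

Lemma apX N : a ((p ^ N)%:R) = (p%:R ^+ N)^-1.
Proof. by rewrite natrX aX ap exprVn. Qed.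

Lemma a_coprime n : coprime p n -> 1 <= a n%:R.
Proof.
move=> cp.
have [al _ hd] := Bezoutr n (prime_gt0 Hp).
rewrite gcdnC (eqP cp) in hd.
case/dvdnP: hd => be hbe.
have h1 : a (1 + (al * n)%:R) <= p%:R^-1.
  have -> : 1 + (al * n)%:R = (1 + al * n)%:R :> K by rewrite natrD.
  by rewrite hbe natrM aM ap ler_piMl ?anat ?invr_ge0 ?ltW ?pR_gt0.
have h2 : 1 = (1 + (al * n)%:R) - (al * n)%:R :> K by rewrite addrK.
have h3 : a 1 <= Num.max (a (1 + (al * n)%:R)) (a (al * n)%:R).
  by rewrite {1}h2; apply: le_trans (aD _ _) _; rewrite aN.
rewrite a1 le_max in h3.
have hp1 : p%:R^-1 < 1 :> R by rewrite invf_lt1 ?pR_gt0 ?pR_gt1.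
case/orP: h3 => h3; first by have := le_trans h3 h1; lra.
rewrite natrM aM in h3.
have := anat al; have := a_ge0 n%:R; have := a_ge0 al%:R; nra.
Qed.

Lemma a_nat_lb n : (0 < n)%N -> 1 <= a n%:R * (p ^ logn p n)%:R.
Proof.
move=> n0; have [m cm hm] := pfactor_coprime Hp n0.
rewrite {1}hm natrM aM apX -mulrA natrX mulVf ?mulr1 ?a_coprime //.
by rewrite expf_neq0 // gt_eqF ?pR_gt0.
Qed.

Lemma a_nat_gt0 n : (0 < n)%N -> 0 < a n%:R.
Proof.
move=> n0; have := a_nat_lb n0; rewrite lt_neqAle a_ge0 andbT.
by apply: contraTneq => <-; rewrite mul0r; lra.
Qed.

Lemma nat_neq0 n : (0 < n)%N -> n%:R != 0 :> K.
Proof. by move=> n0; apply/eqP => h; have := a_nat_gt0 n0; rewrite h a0 ltxx. Qed.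



Lemma logn_fact_inner m r : (r < p)%N -> logn p ((p * m + r)`!) = logn p ((p * m)`!).
Proof.
elim: r => [|r IH] hr; first by rewrite addn0.
rewrite addnS factS lognM ?fact_gt0 // IH ?(ltnW hr) //.
rewrite -addnS logn_coprime // prime_coprime // dvdn_addr ?dvdn_mulr // gtnNdvd //.
Qed.

Lemma logn_fact_split m r : (r < p)%N -> logn p ((p * m + r)`!) = (m + logn p (m`!))%N.
Proof.
move=> hr; rewrite logn_fact_inner //.
have p1 := prime_gt1 Hp.
elim: m => [|m IH]; first by rewrite muln0 fact0 logn1.
have -> : (p * m.+1 = (p * m + p.-1).+1)%N by case: (p) p1 => // q _; rewrite mulnS /=; lia.
have e : ((p * m + p.-1).+1 = p * m.+1)%N by case: (p) p1 => // q _; rewrite mulnS /=; lia.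
rewrite factS lognM ?fact_gt0 // e logn_fact_inner; last by case: (p) p1.
rewrite IH (lognM p (prime_gt0 Hp) (ltn0Sn m)) (logn_prime p Hp) eqxx factS (lognM p (ltn0Sn m)) ?fact_gt0 //.
lia.
Qed.

Lemma legendre k : (p.-1 * logn p k`! <= k)%N.
Proof.
have p1 := prime_gt1 Hp.
elim/ltn_ind: k => k IH.
have [->|k0] := posnP k; first by rewrite fact0 logn1 muln0.
have hk := divn_eq k p.
have hr := ltn_pmod k (prime_gt0 Hp).
have -> : k`! = ((p * (k %/ p) + k %% p)`!)%N by rewrite {1}hk mulnC.
rewrite logn_fact_split //.
have := IH (k %/ p)%N (ltn_Pdiv p1 k0).
move: hk hr; set m := (k %/ p)%N; set r := (k %% p)%N; set L := logn p m`!.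
case: (p) p1 => // q _ /=. nia.
Qed.

Lemma pow_bound (b : R) v m : 0 <= b -> 1 <= b * (p ^ v)%:R -> (p.-1 * v <= m)%N ->
  1 <= b ^+ p.-1 * p%:R ^+ m.
Proof.
move=> b0 h hv.
have h1 : 1 <= (b * (p ^ v)%:R) ^+ p.-1 by apply: exprn_ege1.
apply: le_trans h1 _.
rewrite exprMn natrX -exprM mulnC; apply: ler_wpM2l; first by apply: exprn_ge0.
by apply: ler_weXn2l => //; rewrite ler1n prime_gt0.
Qed.

Lemma fact_bound k : 1 <= a (k`!)%:R ^+ p.-1 * p%:R ^+ k.
Proof.
apply: pow_bound; [exact: a_ge0 | exact: a_nat_lb (fact_gt0 k) | exact: legendre].
Qed.

Lemma pv_bound v : (p.-1 * v + 1 <= p ^ v)%N.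
Proof.
have p1 := prime_gt1 Hp.
elim: v => [|v IH]; first by rewrite muln0 expn0.
rewrite expnS; have : (1 <= p ^ v)%N by rewrite expn_gt0 prime_gt0.
case: (p) p1 IH => // q _ /=. nia.
Qed.

Lemma log_bound k : 1 <= a (k.+1)%:R ^+ p.-1 * p%:R ^+ k.
Proof.
apply: pow_bound; [exact: a_ge0 | exact: a_nat_lb | ].
have h1 := pv_bound (logn p k.+1).
have h2 : (p ^ logn p k.+1 <= k.+1)%N by apply: dvdn_leq => //; apply: pfactor_dvdnn.
lia.
Qed.


Lemma Kcvg_ext (u v : nat -> K) l : (forall n, u n = v n) -> Kcvg a u l -> Kcvg a v l.
Proof. by move=> h hu e e0; have [N hN] := hu e e0; exists N => n hn; rewrite -h hN. Qed.

Lemma Kcvg_cst c : Kcvg a (fun _ => c) c.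
Proof. by move=> e e0; exists 0%N => n _; rewrite subrr a0. Qed.

Lemma Kcvg_D u v l m : Kcvg a u l -> Kcvg a v m -> Kcvg a (fun n => u n + v n) (l + m).
Proof.
move=> hu hv e e0; have [N1 h1] := hu e e0; have [N2 h2] := hv e e0.
exists (maxn N1 N2) => n hn.
have -> : u n + v n - (l + m) = (u n - l) + (v n - m) by ring.
apply: aDlt; [apply: h1 | apply: h2]; apply: leq_trans hn; by rewrite ?leq_maxl ?leq_maxr.
Qed.

Lemma Kcvg_N u l : Kcvg a u l -> Kcvg a (fun n => - u n) (- l).
Proof.
move=> hu e e0; have [N h] := hu e e0; exists N => n hn.
by rewrite -opprD aN h.
Qed.

Lemma Kcvg_B u v l m : Kcvg a u l -> Kcvg a v m -> Kcvg a (fun n => u n - v n) (l - m).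
Proof. by move=> hu hv; apply: Kcvg_D => //; apply: Kcvg_N. Qed.

Lemma Kcvg_Ml c u l : Kcvg a u l -> Kcvg a (fun n => c * u n) (c * l).
Proof.
move=> hu e e0.
have hc : 0 < a c + 1 by have := a_ge0 c; lra.
have [N h] := hu (e / (a c + 1)) (divr_gt0 e0 hc).
exists N => n hn; rewrite -mulrBr aM.
have := h n hn; have := a_ge0 c; have := a_ge0 (u n - l).
move=> h1 h2 h3.
have h4 : e / (a c + 1) * (a c + 1) = e by rewrite mulfVK // gt_eqF.
nra.
Qed.

Lemma Kcvg_M u v l m : Kcvg a u l -> Kcvg a v m -> Kcvg a (fun n => u n * v n) (l * m).
Proof.
move=> hu hv e e0.
set B := a l + 1 + a m.
have hB : 0 < B by have := a_ge0 l; have := a_ge0 m; rewrite /B; lra.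
have [N1 h1] := hu 1 ltr01.
have [N2 h2] := hu (e / B) (divr_gt0 e0 hB).
have [N3 h3] := hv (e / B) (divr_gt0 e0 hB).
exists (maxn N1 (maxn N2 N3)) => n hn.
rewrite !geq_max in hn; case/and3P: hn => hn1 hn2 hn3.
have -> : u n * v n - l * m = u n * (v n - m) + (u n - l) * m by ring.
have hu1 : a (u n) <= a l + 1.
  have -> : u n = l + (u n - l) by ring.
  apply: aDle; have := a_ge0 l; have := h1 n hn1; lra.
have hE : e / B * B = e by rewrite mulfVK // gt_eqF.
have := h2 n hn2; have := h3 n hn3; have := a_ge0 (u n); have := a_ge0 (v n - m);
have := a_ge0 (u n - l); have := a_ge0 l; have := a_ge0 m.
move=> g1 g2 g3 g4 g5 g6 g7.
apply: aDlt; rewrite aM; rewrite /B in hE; nra.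
Qed.

Lemma Kcvg_sum m (F : nat -> 'I_m -> K) (L : 'I_m -> K) :
  (forall i, Kcvg a (fun N => F N i) (L i)) ->
  Kcvg a (fun N => \sum_(i < m) F N i) (\sum_(i < m) L i).
Proof.
elim: m F L => [|m IH] F L h.
  by apply: (Kcvg_ext (u := fun _ => 0)); [move=> n; rewrite !big_ord0 | rewrite big_ord0; apply: Kcvg_cst].
apply: (Kcvg_ext (u := fun N => \sum_(i < m) F N (widen_ord (leqnSn m) i) + F N ord_max)).
  by move=> n; rewrite big_ord_recr.
rewrite big_ord_recr; apply: Kcvg_D; last exact: h.
by apply: IH => i; apply: h.
Qed.

Lemma Kcvg_uniq u l1 l2 : Kcvg a u l1 -> Kcvg a u l2 -> l1 = l2.
Proof.
move=> h1 h2; apply/eqP/negPn/negP => hne.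
have hd : 0 < a (l1 - l2).
  rewrite lt_neqAle a_ge0 andbT; apply/eqP => /esym /a_eq0 /eqP.
  by rewrite subr_eq0 (negPf hne).
have [N1 g1] := h1 _ hd; have [N2 g2] := h2 _ hd.
have e1 := g1 (maxn N1 N2) (leq_maxl _ _).
have e2 := g2 (maxn N1 N2) (leq_maxr _ _).
have : a (l1 - l2) < a (l1 - l2).
  have E : l1 - l2 = (u (maxn N1 N2) - l2) - (u (maxn N1 N2) - l1) by ring.
  by rewrite {1}E; apply: aBlt.
by rewrite ltxx.
Qed.

Lemma Klim_eq u l : Kcvg a u l -> Klim a u = l.
Proof.
move=> h; apply: (Kcvg_uniq (u := u)) => //.
by apply: (epsilon_spec (inhabits 0) (fun l => Kcvg a u l)); exists l.
Qed.

Lemma Kcvg_bound u l x b : Kcvg a u l -> 0 <= b ->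
  (exists N, forall n, (N <= n)%N -> a (u n - x) <= b) -> a (l - x) <= b.
Proof.
move=> hu b0 [N hN]; rewrite leNgt; apply/negP => hlt.
have hp : 0 < a (l - x) by apply: le_lt_trans hlt.
have [N1 h1] := hu _ hp.
set n := maxn N N1.
have e1 := h1 n (leq_maxr _ _).
have e2 := hN n (leq_maxl _ _).
have : a (l - x) < a (l - x).
  have E : l - x = (u n - x) - (u n - l) by ring.
  rewrite {1}E; apply: aBlt => //; apply: le_lt_trans e2 hlt.
by rewrite ltxx.
Qed.

Lemma Kcvg_dom u l (r : nat -> R) :
  (forall n, a (u n - l) <= r n) ->
  (forall e, 0 < e -> exists N, forall n, (N <= n)%N -> r n < e) -> Kcvg a u l.
Proof.
move=> h hr e e0; have [N hN] := hr e e0; exists N => n hn.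
by apply: le_lt_trans (h n) (hN n hn).
Qed.

Lemma Kseries_cvg (c : nat -> K) :
  (forall e, 0 < e -> exists N, forall k, (N <= k)%N -> a (c k) < e) ->
  Kcvg a (fun N => \sum_(k < N) c k) (Kseries a c).
Proof.
move=> hc.
have hC : Kcauchy a (fun N => \sum_(k < N) c k).
  move=> e e0; have [N hN] := hc e e0; exists N.
  suff H : forall m n, (N <= n)%N -> (n <= m)%N ->
      a (\sum_(k < m) c k - \sum_(k < n) c k) < e.
    move=> m n hm hn; have [hmn|hnm] := leqP n m; first exact: H.
    by rewrite aBC; apply: H => //; apply: ltnW.
  move=> m n hn hnm.
  rewrite -!(big_mkord xpredT) (big_cat_nat (leq0n n) hnm) /= addrC addrK.
  rewrite big_nat_cond; apply: asum_lt => // i /andP [/andP [hi _] _].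
  by apply: hN; apply: leq_trans hn hi.
have [l hl] := acomplete hC.
by rewrite /Kseries (Klim_eq hl).
Qed.

Local Notation m := p.-1.

Lemma pow_lt_inv (x y : R) : 0 <= x -> 0 <= y -> x ^+ m < y ^+ m -> x < y.
Proof. by move=> x0 y0; rewrite ltr_pXn2r ?pm1_gt0 // nnegrE. Qed.
Lemma pow_le_inv (x y : R) : 0 <= x -> 0 <= y -> x ^+ m <= y ^+ m -> x <= y.
Proof. by move=> x0 y0; rewrite ler_pXn2r ?pm1_gt0 // nnegrE. Qed.
Lemma pow_le (x y : R) : 0 <= x -> x <= y -> x ^+ m <= y ^+ m.
Proof. by move=> x0 xy; rewrite lerXn2r // nnegrE; apply: le_trans xy. Qed.

Lemma small_terms (f : nat -> K) (be s : R) : 0 <= s -> s < 1 -> 0 <= be ->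
  (forall k, a (f k) ^+ m <= be * s ^+ k) ->
  forall e, 0 < e -> exists N, forall k, (N <= k)%N -> a (f k) < e.
Proof.
move=> s0 s1 b0 h e e0.
have em : 0 < e ^+ m by apply: exprn_gt0.
have b1 : 0 < be + 1 by lra.
have [N hN] := geo_small s0 s1 (divr_gt0 em b1).
exists N => k hk; apply: pow_lt_inv; [exact: a_ge0 | exact: ltW |].
apply: le_lt_trans (h k) _.
have := hN k hk; have := exprn_ge0 k s0.
have hE : e ^+ m / (be + 1) * (be + 1) = e ^+ m by rewrite mulfVK // gt_eqF.
nra.
Qed.

Lemma asum_pow (I : Type) (r : seq I) (P : pred I) (F : I -> K) t :
  0 <= t -> (forall i, P i -> a (F i) ^+ m <= t) -> a (\sum_(i <- r | P i) F i) ^+ m <= t.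
Proof.
move=> t0 h; apply: (big_ind (fun x => a x ^+ m <= t)) => //.
  by rewrite a0 expr0n eqn0Ngt pm1_gt0.
move=> x y hx hy; have := aD x y; rewrite le_max => /orP [] hxy.
  by apply: le_trans _ hx; apply: pow_le => //; apply: a_ge0.
by apply: le_trans _ hy; apply: pow_le => //; apply: a_ge0.
Qed.

Definition ee (z : K) k := z ^+ k / (k`!)%:R.
Definition sig (z : K) := a z ^+ m * p%:R.

Lemma sig_ge0 z : 0 <= sig z.
Proof. by rewrite /sig mulr_ge0 ?exprn_ge0 ?a_ge0 ?ltW ?pR_gt0. Qed.

Lemma sig_mono x y : a x <= a y -> sig x <= sig y.
Proof.
move=> h; rewrite /sig; apply: ler_wpM2r; first exact: ltW pR_gt0.
by apply: pow_le => //; apply: a_ge0.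
Qed.

Lemma ee_mul z k : ee z k * (k`!)%:R = z ^+ k.
Proof. by rewrite /ee divfK // nat_neq0 // fact_gt0. Qed.

Lemma ee_bound z k : a (ee z k) ^+ m <= sig z ^+ k.
Proof.
have h := fact_bound k.
have e1 : a (ee z k) * a (k`!)%:R = a z ^+ k by rewrite -aM ee_mul aX.
have hA : 0 <= a (ee z k) ^+ m by rewrite exprn_ge0 ?a_ge0.
apply: le_trans (_ : a (ee z k) ^+ m * (a (k`!)%:R ^+ m * p%:R ^+ k) <= _).
  by rewrite ler_peMr.
by rewrite mulrA -exprMn e1 /sig exprMn -!exprM mulnC.
Qed.

Lemma ee_le1 z k : sig z < 1 -> a (ee z k) <= 1.
Proof.
move=> hs; apply: pow_le_inv; rewrite ?a_ge0 ?ler01 // expr1n.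
apply: le_trans (ee_bound z k) _; apply: exprn_ile1; rewrite ?sig_ge0 ?ltW //.
Qed.

Lemma Kexp_cvg z : sig z < 1 -> Kcvg a (fun N => \sum_(k < N) ee z k) (Kexp a z).
Proof.
move=> hs; apply: Kseries_cvg.
apply: (small_terms (be := 1) (s := sig z)); rewrite ?sig_ge0 ?ler01 // => k.
by rewrite mul1r ee_bound.
Qed.


Lemma Kexp0 : Kexp a 0 = 1.
Proof.
rewrite /Kexp /Kseries; apply: Klim_eq => e e0; exists 1%N => n hn.
case: n hn => // n _; rewrite big_ord_recl /= expr0 fact0 divr1.
rewrite big1 ?addr0 ?subrr ?a0 // => i _.
by rewrite expr0n /= mul0r.
Qed.

Lemma ee_add x y N : ee (x + y) N = \sum_(i < N.+1) ee x i * ee y (N - i).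
Proof.
rewrite /ee addrC exprDn mulr_suml; apply: eq_bigr => i _.
have hi : (i <= N)%N by rewrite -ltnS.
have hf := bin_fact hi.
have c0 : ('C(N, i))%:R != 0 :> K by rewrite nat_neq0 // bin_gt0.
have f1 : (i`!)%:R != 0 :> K by rewrite nat_neq0 // fact_gt0.
have f2 : ((N - i)`!)%:R != 0 :> K by rewrite nat_neq0 // fact_gt0.
rewrite -hf !natrM -mulr_natr.
by field; rewrite c0 f1 f2.
Qed.

Section Add.
Variables x y : K.
Local Notation u := (ee x).
Local Notation v := (ee y).
Definition Qs N := \sum_(i < N) u i * \sum_(0 <= j < N - i) v j.

Lemma Qs_step N : Qs N.+1 = Qs N + \sum_(i < N.+1) u i * v (N - i).
Proof.
rewrite /Qs big_ord_recr /= subSnn big_nat1 [in RHS]big_ord_recr /= subnn addrA.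
congr (_ + _).
rewrite -big_split /=; apply: eq_bigr => i _.
have hi : (i <= N)%N by apply: ltnW.
by rewrite subSn // big_nat_recr //= mulrDr.
Qed.

Lemma Qs_eq N : Qs N = \sum_(k < N) ee (x + y) k.
Proof.
elim: N => [|N IH]; first by rewrite /Qs !big_ord0.
by rewrite Qs_step IH [in RHS]big_ord_recr /= ee_add.
Qed.

Lemma Qs_diff N : (\sum_(k < N) u k) * (\sum_(k < N) v k) - Qs N =
  \sum_(i < N) u i * \sum_(N - i <= j < N) v j.
Proof.
rewrite /Qs mulr_suml -sumrB; apply: eq_bigr => i _.
rewrite -mulrBr; congr (_ * _).
rewrite -(big_mkord xpredT) (big_cat_nat (leq0n (N - i)) (leq_subr i N)) /=.
by rewrite addrC addrK.
Qed.

Lemma Qs_bound N : sig x < 1 -> sig y < 1 ->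
  a ((\sum_(k < N) u k) * (\sum_(k < N) v k) - Qs N) ^+ m <= (Num.max (sig x) (sig y)) ^+ N.
Proof.
move=> hx hy; set s := Num.max (sig x) (sig y).
have s0 : 0 <= s by rewrite le_max sig_ge0.
have s1 : s <= 1 by rewrite ge_max !ltW.
rewrite Qs_diff; apply: asum_pow; first exact: exprn_ge0.
move=> i _; rewrite mulr_sumr big_nat_cond; apply: asum_pow; first exact: exprn_ge0.
move=> j /andP [/andP [hj _] _].
rewrite aM exprMn.
apply: le_trans (_ : sig x ^+ i * sig y ^+ j <= _).
  by apply: ler_pM; rewrite ?exprn_ge0 ?a_ge0 ?ee_bound.
apply: le_trans (_ : s ^+ i * s ^+ j <= _).
  apply: ler_pM; rewrite ?exprn_ge0 ?sig_ge0 //; apply: lerXn2r;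
    by rewrite ?nnegrE ?sig_ge0 // le_max lexx ?orbT.
rewrite -exprD; apply: ler_wiXn2l => //.
have := ltn_ord i; move: hj; lia.
Qed.

End Add.

Lemma Kexp_add x y : sig x < 1 -> sig y < 1 -> Kexp a (x + y) = Kexp a x * Kexp a y.
Proof.
move=> hx hy.
have hxy : sig (x + y) < 1.
  have := aD x y; rewrite le_max => /orP [] h.
    by apply: le_lt_trans (sig_mono h) hx.
  by apply: le_lt_trans (sig_mono h) hy.
apply: (Kcvg_uniq (Kexp_cvg hxy)).
set s := Num.max (sig x) (sig y).
have s0 : 0 <= s by rewrite le_max sig_ge0.
have s1 : s < 1 by rewrite gt_max hx hy.
have hd : Kcvg a (fun N => (\sum_(k < N) ee x k) * (\sum_(k < N) ee y k) - Qs x y N) 0.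
  apply: (Kcvg_dom (r := fun N => a ((\sum_(k < N) ee x k) * (\sum_(k < N) ee y k) - Qs x y N))).
    by move=> n; rewrite subr0.
  apply: (small_terms (be := 1) (s := s)) => // k.
  by rewrite mul1r Qs_bound.
have := Kcvg_B (Kcvg_M (Kexp_cvg hx) (Kexp_cvg hy)) hd.
rewrite subr0; apply: Kcvg_ext => n.
by rewrite opprB addrC subrK Qs_eq.
Qed.

Lemma Kexp_nat c (n : nat) : sig c < 1 -> Kexp a (n%:R * c) = Kexp a c ^+ n.
Proof.
move=> hc; elim: n => [|n IH]; first by rewrite mul0r Kexp0 expr0.
have hn : sig (n%:R * c) < 1.
  apply: le_lt_trans hc; apply: sig_mono; rewrite aM.
  by apply: ler_piMl; rewrite ?a_ge0 ?anat.
by rewrite -natr1 mulrDl mul1r addrC Kexp_add // IH exprS.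
Qed.

Lemma Kexp_near1 (M c : K) : sig c < 1 -> a M <= 1 ->
  a (Kexp a (M * c) - (1 + M * c)) <= a M ^+ 2.
Proof.
move=> hc hM.
have hMc : sig (M * c) < 1.
  apply: le_lt_trans hc; apply: sig_mono; rewrite aM.
  by apply: ler_piMl; rewrite ?a_ge0.
apply: (Kcvg_bound (Kexp_cvg hMc)); first by rewrite exprn_ge0 ?a_ge0.
exists 2%N => n hn.
case: n hn => [|[|n]] // _.
have eb : forall i, bump 0 i = i.+1 by [].
have f1 : (1`!)%:R = 1 :> K by [].
rewrite 2!big_ord_recl /= /ee expr0 expr1 !eb fact0 f1 !divr1 addrA addrC addrK.
apply: asum_le; first by rewrite exprn_ge0 ?a_ge0.
move=> i _; rewrite !eb exprMn -mulrA aM aX.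
have h1 : a (c ^+ i.+2 / (i.+2`!)%:R) <= 1 by apply: (ee_le1 i.+2 hc).
have h2 : a M ^+ i <= 1 by apply: exprn_ile1 => //; apply: a_ge0.
have h3 : 0 <= a M ^+ i by apply: exprn_ge0; apply: a_ge0.
have h4 : 0 <= a M ^+ 2 by apply: exprn_ge0; apply: a_ge0.
have h5 := a_ge0 (c ^+ i.+2 / (i.+2`!)%:R).
rewrite -[in a M ^+ _]addn2 exprD.
apply: le_trans (_ : a M ^+ i * a M ^+ 2 * 1 <= _).
  by apply: ler_wpM2l; [rewrite mulr_ge0 | exact: h1].
by rewrite mulr1 ler_piMl.
Qed.

Lemma Klog_small q : a (1 - q) ^+ m < (p%:R)^-1 -> sig (Klog a q) < 1.
Proof.
move=> hq.
set u := q - 1.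
have hu : sig u < 1.
  rewrite /sig /u -aN opprB.
  by rewrite -ltr_pdivlMr ?pR_gt0 // mul1r.
set rho := a u ^+ m.
have rho0 : 0 <= rho by rewrite exprn_ge0 ?a_ge0.
set t := fun k : nat => (-1) ^+ k * u ^+ k.+1 / (k.+1)%:R.
have ht : forall k, a (t k) ^+ m <= rho * (rho * p%:R) ^+ k.
  move=> k.
  have e1 : a (t k) * a (k.+1)%:R = a u ^+ k.+1.
    by rewrite -aM /t divfK ?nat_neq0 // aM aX aN1 expr1n mul1r aX.
  have hA : 0 <= a (t k) ^+ m by rewrite exprn_ge0 ?a_ge0.
  apply: le_trans (_ : a (t k) ^+ m * (a (k.+1)%:R ^+ m * p%:R ^+ k) <= _).
    by rewrite ler_peMr ?log_bound.
  by rewrite mulrA -exprMn e1 /rho exprMn -!exprM mulnC mulnS exprD mulrA.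
have hs : rho * p%:R < 1 by [].
have hs0 : 0 <= rho * p%:R by apply: sig_ge0.
have ht1 : forall k, a (t k) <= a u.
  move=> k; apply: pow_le_inv; rewrite ?a_ge0 //; apply: le_trans (ht k) _.
  by rewrite -/rho ler_piMr // exprn_ile1 // ltW.
have hcv : Kcvg a (fun N => \sum_(k < N) t k) (Klog a q).
  apply: Kseries_cvg; apply: (small_terms (be := rho) (s := rho * p%:R)) => //.
apply: le_lt_trans hu; apply: sig_mono.
rewrite -[Klog a q]subr0; apply: (Kcvg_bound hcv); first exact: a_ge0.
exists 0%N => n _; rewrite subr0; apply: asum_le; first exact: a_ge0.
by move=> i _; apply: ht1.
Qed.

Lemma sig_lt1_a (z : K) : sig z < 1 -> a z <= 1.
Proof.
move=> h; apply: pow_le_inv; rewrite ?a_ge0 ?ler01 // expr1n.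
apply: le_trans (ltW h); rewrite /sig ler_peMr ?exprn_ge0 ?a_ge0 //.
exact: ltW pR_gt1.
Qed.

Definition relE (w : K) (T : nat -> K) n := w * \sum_(i < n.+1) T (n - i)%N *+ 'C(n, i) - T n.

Lemma ext1 w T n : relE w T n = (w - 1) * T n + w * \sum_(i < n) T (n - i.+1)%N *+ 'C(n, i.+1).
Proof. by rewrite /relE big_ord_recl /= subn0 bin0 mulr1n mulrDr; ring. Qed.

Lemma ext2 T n : relE 1 T n.+1 = T n *+ n.+1 + \sum_(i < n) T (n - i.+1)%N *+ 'C(n.+1, i.+2).
Proof.
rewrite ext1 subrr mul0r add0r mul1r big_ord_recl /= subSS subn0 bin1.
by congr (_ + _); apply: eq_bigr => i _; rewrite subSS.
Qed.

Lemma Kcvg_natmul u l k : Kcvg a u l -> Kcvg a (fun n => u n *+ k) (l *+ k).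
Proof.
move=> h; apply: (Kcvg_ext (u := fun n => k%:R * u n)); first by move=> n; rewrite mulr_natl.
have -> : l *+ k = k%:R * l by rewrite mulr_natl.
exact: Kcvg_Ml.
Qed.

Lemma relE_lin w T1 T2 n : relE w T1 n - relE w T2 n = relE w (fun k => T1 k - T2 k) n.
Proof.
rewrite /relE.
have -> : \sum_(i < n.+1) (T1 (n - i)%N - T2 (n - i)%N) *+ 'C(n, i) =
   \sum_(i < n.+1) T1 (n - i)%N *+ 'C(n, i) - \sum_(i < n.+1) T2 (n - i)%N *+ 'C(n, i).
  by rewrite -sumrB; apply: eq_bigr => i _; rewrite mulrnBl.
ring.
Qed.

Lemma relE_cvg w (S : nat -> nat -> K) (B : nat -> K) n :
  (forall k, Kcvg a (fun N => S N k) (B k)) ->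
  Kcvg a (fun N => relE w (S N) n) (relE w B n).
Proof.
move=> h; apply: (@Kcvg_B (fun N => w * \sum_(i < n.+1) S N (n - i)%N *+ 'C(n, i))
   (fun N => S N n)); last exact: h.
apply: (@Kcvg_Ml w (fun N => \sum_(i < n.+1) S N (n - i)%N *+ 'C(n, i))).
apply: (Kcvg_sum (F := fun N i => S N (n - i)%N *+ 'C(n, i))) => i.
exact: Kcvg_natmul.
Qed.

Section Rel.
Variables (w : K) (S : nat -> nat -> K) (Rn : nat -> nat -> K) (r : nat -> K).
Hypothesis Hrel : forall N n, relE w (S N) n = Rn N n.
Hypothesis HR : forall n, Kcvg a (fun N => Rn N n) (r n).

Lemma rel_conv n : exists l, Kcvg a (fun N => S N n) l.
Proof.
elim/ltn_ind: n => n IH.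
have IH' : forall k, (k < n)%N -> Kcvg a (fun N => S N k) (Klim a (fun N => S N k)).
  move=> k hk; have [l hl] := IH k hk; by rewrite (Klim_eq hl).
have hsum : forall (C : nat -> nat), Kcvg a (fun N => \sum_(i < n) S N (n - i.+1)%N *+ C i)
     (\sum_(i < n) Klim a (fun N => S N (n - i.+1)%N) *+ C i).
  move=> C; apply: (@Kcvg_sum n (fun N (i : 'I_n) => S N (n - i.+1)%N *+ C i)
     (fun i => Klim a (fun N => S N (n - i.+1)%N) *+ C i)) => i.
  apply: Kcvg_natmul; apply: IH'.
  by have := ltn_ord i; lia.
have [w1|w1] := eqVneq w 1.
  (* w = 1 : use the relation at n.+1 *)
  have E : forall N, S N n = (n.+1%:R)^-1 * (Rn N n.+1 -
                 \sum_(i < n) S N (n - i.+1)%N *+ 'C(n.+1, i.+2)).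
    move=> N; rewrite -Hrel w1 ext2 addrK.
    have e : S N n *+ n.+1 = n.+1%:R * S N n by rewrite mulr_natl.
    rewrite e mulKf //.
    by rewrite nat_neq0.
  eexists; apply: (Kcvg_ext (u := fun N => (n.+1%:R)^-1 * (Rn N n.+1 -
                 \sum_(i < n) S N (n - i.+1)%N *+ 'C(n.+1, i.+2)))).
    by move=> N; rewrite E.
  by apply: Kcvg_Ml; apply: Kcvg_B; [apply: HR | apply: (hsum (fun i => 'C(n.+1, i.+2)))].
have E : forall N, S N n = (w - 1)^-1 * (Rn N n -
                 w * \sum_(i < n) S N (n - i.+1)%N *+ 'C(n, i.+1)).
  move=> N; rewrite -Hrel ext1 addrK mulKf //.
  by rewrite subr_eq0.
eexists; apply: (Kcvg_ext (u := fun N => (w - 1)^-1 * (Rn N n -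
                 w * \sum_(i < n) S N (n - i.+1)%N *+ 'C(n, i.+1)))).
  by move=> N; rewrite E.
apply: Kcvg_Ml; apply: Kcvg_B; first exact: HR.
by apply: Kcvg_Ml; apply: (hsum (fun i => 'C(n, i.+1))).
Qed.

Definition Blim n := Klim a (fun N => S N n).

Lemma Blim_cvg n : Kcvg a (fun N => S N n) (Blim n).
Proof. by have [l hl] := rel_conv n; rewrite /Blim (Klim_eq hl). Qed.

Lemma Blim_rel n : relE w Blim n = r n.
Proof.
apply: (Kcvg_uniq (@relE_cvg w S Blim n Blim_cvg)).
by apply: (Kcvg_ext (u := fun N => Rn N n)) => // N; rewrite Hrel.
Qed.

Lemma rel_uniq (B : nat -> K) : (forall n, relE w B n = r n) -> forall n, B n = Blim n.
Proof.
move=> hB.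
have h0 : forall n, relE w (fun k => B k - Blim k) n = 0.
  by move=> n; rewrite -relE_lin hB Blim_rel subrr.
suff : forall n, B n - Blim n = 0 by move=> H n; apply/eqP; rewrite -subr_eq0 H.
elim/ltn_ind => n IH.
have hz : \sum_(i < n) (B (n - i.+1)%N - Blim (n - i.+1)%N) *+ 'C(n, i.+1) = 0.
  apply: big1 => i _; rewrite IH ?mul0rn //.
  by have := ltn_ord i; lia.
have [w1|w1] := eqVneq w 1.
  have := h0 n.+1; rewrite w1 ext2.
  have -> : \sum_(i < n) (B (n - i.+1)%N - Blim (n - i.+1)%N) *+ 'C(n.+1, i.+2) = 0.
    apply: big1 => i _; rewrite IH ?mul0rn //.
    by have := ltn_ord i; lia.
  rewrite addr0 -mulr_natr => /eqP; rewrite mulf_eq0 => /orP [/eqP //|].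
  by rewrite (negPf (nat_neq0 (ltn0Sn n))).
have := h0 n; rewrite ext1 hz mulr0 addr0 => /eqP; rewrite mulf_eq0 => /orP [|/eqP //].
by rewrite subr_eq0 (negPf w1).
Qed.

Lemma rel_main : (exists B, forall n, relE w B n = r n) /\
  (forall B, (forall n, relE w B n = r n) -> forall n, Kcvg a (fun N => S N n) (B n)).
Proof.
split; first by exists Blim; apply: Blim_rel.
by move=> B hB n; rewrite (rel_uniq hB); apply: Blim_cvg.
Qed.

End Rel.

Lemma relE_ext w T1 T2 n : (forall k, T1 k = T2 k) -> relE w T1 n = relE w T2 n.
Proof. by move=> h; rewrite /relE h; congr (_ * _ - _); apply: eq_bigr => i _; rewrite h. Qed.

Lemma relE_scale w (s : K) T n : relE w (fun k => s * T k) n = s * relE w T n.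
Proof.
rewrite /relE.
have -> : \sum_(i < n.+1) s * T (n - i)%N *+ 'C(n, i) = s * \sum_(i < n.+1) T (n - i)%N *+ 'C(n, i).
  by rewrite mulr_sumr; apply: eq_bigr => i _; rewrite mulrnAr.
ring.
Qed.

Section Tele.
Variables (w x : K) (M : nat).
Definition Tsum n := \sum_(y < M) w ^+ y * (x + y%:R) ^+ n.

Lemma tele n : relE w Tsum n = w ^+ M * (x + M%:R) ^+ n - x ^+ n.
Proof.
have step : forall y : nat, w * \sum_(i < n.+1) (w ^+ y * (x + y%:R) ^+ (n - i)%N) *+ 'C(n, i)
    = w ^+ y.+1 * (x + y.+1%:R) ^+ n.
  move=> y; rewrite -natr1 addrA exprDn !mulr_sumr; apply: eq_bigr => i _.
  by rewrite expr1n mulr1 !mulrnAr exprS mulrA.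
rewrite /relE /Tsum.
have -> : \sum_(i < n.+1) (\sum_(y < M) w ^+ y * (x + y%:R) ^+ (n - i)%N) *+ 'C(n, i) =
    \sum_(y < M) \sum_(i < n.+1) (w ^+ y * (x + y%:R) ^+ (n - i)%N) *+ 'C(n, i).
  rewrite exchange_big /=; apply: eq_bigr => i _; by rewrite sumrMnl.
rewrite mulr_sumr.
under eq_bigr do rewrite step.
set g := fun y : nat => w ^+ y * (x + y%:R) ^+ n.
have e1 := big_ord_recl M (fun y : 'I_M.+1 => g y).
have e2 := big_ord_recr M (fun y : 'I_M.+1 => g y).
rewrite /= in e1 e2.
have -> : \sum_(i < M) w ^+ i.+1 * (x + i.+1%:R) ^+ n = \sum_(i < M) g (bump 0 i) by [].
have -> : \sum_(i < M) w ^+ i * (x + i%:R) ^+ n = \sum_(i < M) g i by [].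
have eg0 : g 0%N = x ^+ n by rewrite /g expr0 mul1r addr0.
have -> : \sum_(i < M) g (bump 0 i) = \sum_(i < M) g i + g M - g 0%N.
  by rewrite -e2 e1 addrC addKr.
by rewrite eg0 /g; ring.
Qed.
End Tele.

Section MainQ.
Variables (q : K) (h : int).
Hypothesis Hq : a (1 - q) ^+ m < (p%:R)^-1.

Definition cc := h%:~R * Klog a q.
Definition ww := Kexp a cc.

Lemma sig_c : sig cc < 1.
Proof.
apply: le_lt_trans (Klog_small Hq); apply: sig_mono.
by rewrite /cc aM ler_piMl ?a_ge0 ?a_intr.
Qed.

Lemma a_c : a cc <= 1.
Proof. exact: sig_lt1_a sig_c. Qed.

Lemma qpow_y (y : nat) : Kqpow a q (h * y%:Z)%:~R = ww ^+ y.
Proof.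
rewrite /Kqpow intrM -pmulrn /ww -Kexp_nat ?sig_c //.
by congr (Kexp a _); rewrite /cc; ring.
Qed.

Lemma qpow_h : Kqpow a q h%:~R = ww.
Proof. by []. Qed.

Section X.
Variable x : K.
Definition XX := Num.max 1 (a x).
Lemma XX_ge1 : 1 <= XX. Proof. by rewrite le_max lexx. Qed.
Lemma ax_XX : a x <= XX. Proof. by rewrite le_max lexx orbT. Qed.

Lemma xn' n : x * (x ^+ n.-1 *+ n) = x ^+ n *+ n.
Proof. by case: n => [|n]; rewrite ?mulr0n ?mulr0 // mulrnAr -exprS. Qed.

Lemma an' n : a (x ^+ n.-1 *+ n) <= XX ^+ n.
Proof.
rewrite -mulr_natr aM aX.
have h1 := anat n; have h2 : 0 <= a x ^+ n.-1 by rewrite exprn_ge0 ?a_ge0.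
apply: le_trans (_ : a x ^+ n.-1 * 1 <= _); first by rewrite ler_wpM2l.
rewrite mulr1; apply: le_trans (_ : XX ^+ n.-1 <= _).
  by apply: lerXn2r; rewrite ?nnegrE ?a_ge0 ?ax_XX // (le_trans ler01 XX_ge1).
by apply: ler_weXn2l; [apply: XX_ge1 | apply: leq_pred].
Qed.

Lemma aY (M : K) n : a M <= 1 -> a ((x + M) ^+ n) <= XX ^+ n.
Proof.
move=> hM; rewrite aX; apply: lerXn2r; rewrite ?nnegrE ?a_ge0 ?(le_trans ler01 XX_ge1) //.
by apply: aDle; [apply: ax_XX | apply: le_trans hM XX_ge1].
Qed.

Lemma Fbound (M : K) : a M <= 1 -> forall n,
  a ((x + M) ^+ n - x ^+ n - M * (x ^+ n.-1 *+ n)) <= a M ^+ 2 * XX ^+ n.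
Proof.
move=> hM; have aM0 := a_ge0 M; have X1 := XX_ge1.
have hM2 : 0 <= a M ^+ 2 by apply: exprn_ge0.
elim => [|n IH].
  by rewrite !expr0 mulr0n mulr0 subrr subr0 a0 mulr_ge0 ?expr0.
have id : (x + M) ^+ n.+1 - x ^+ n.+1 - M * (x ^+ n.+1.-1 *+ n.+1) =
   (x + M) * ((x + M) ^+ n - x ^+ n - M * (x ^+ n.-1 *+ n)) + M ^+ 2 * (x ^+ n.-1 *+ n).
  rewrite /= mulrS !exprS.
  have e := xn' n; move: e.
  generalize (x ^+ n.-1 *+ n) => C.
  generalize ((x + M) ^+ n) => A.
  generalize (x ^+ n) => B.
  move=> e; rewrite -e; ring.
rewrite id; apply: aDle.
  rewrite aM; apply: le_trans (_ : XX * (a M ^+ 2 * XX ^+ n) <= _).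
    apply: ler_pM; rewrite ?a_ge0 //.
    by apply: aDle; [apply: ax_XX | apply: le_trans hM X1].
  by rewrite [XX ^+ n.+1]exprS mulrCA.
rewrite aM aX; apply: ler_wpM2l => //.
apply: le_trans (an' n) _; apply: ler_weXn2l => //.
Qed.

Definition SS N n := ((p ^ N)%:R)^-1 * \sum_(y < p ^ N) Kqpow a q (h * y%:Z)%:~R * (x + y%:R) ^+ n.
Definition RR N n := ((p ^ N)%:R)^-1 * (ww ^+ (p ^ N) * (x + (p ^ N)%:R) ^+ n - x ^+ n).
Definition rr n := cc * x ^+ n + x ^+ n.-1 *+ n.

Lemma SS_rel N n : relE ww (SS N) n = RR N n.
Proof.
have e : forall k, SS N k = ((p ^ N)%:R)^-1 * Tsum ww x (p ^ N) k.
  move=> k; rewrite /SS /Tsum; congr (_ * _); apply: eq_bigr => y _; by rewrite qpow_y.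
by rewrite (relE_ext _ _ e) relE_scale tele.
Qed.

Lemma RR_bound N n : a (RR N n - rr n) <= (p%:R^-1) ^+ N * XX ^+ n.
Proof.
set Mk := (p ^ N)%:R : K.
have aMk : a Mk = (p%:R^-1) ^+ N by rewrite /Mk apX exprVn.
have hp1 : 0 <= p%:R^-1 :> R by rewrite invr_ge0 ltW ?pR_gt0.
have hp2 : p%:R^-1 <= 1 :> R by rewrite invf_le1 ?pR_gt0 ?ltW ?pR_gt1.
have hM1 : a Mk <= 1 by rewrite aMk exprn_ile1.
have hM0 : Mk != 0 by rewrite /Mk nat_neq0 // expn_gt0 prime_gt0.
have aM0 : 0 < a Mk by rewrite /Mk a_nat_gt0 // expn_gt0 prime_gt0.
have hD : ww ^+ (p ^ N) = Kexp a (Mk * cc) by rewrite /ww -Kexp_nat ?sig_c.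
have hE : a (ww ^+ (p ^ N) - (1 + Mk * cc)) <= a Mk ^+ 2.
  by rewrite hD; apply: Kexp_near1 sig_c hM1.
have hF := Fbound hM1 n.
have hY := aY n hM1.
have hn' := an' n.
have hc := a_c.
have id : RR N n - rr n = Mk^-1 * (((x + Mk) ^+ n - x ^+ n - Mk * (x ^+ n.-1 *+ n)) +
    Mk * cc * (Mk * (x ^+ n.-1 *+ n) + ((x + Mk) ^+ n - x ^+ n - Mk * (x ^+ n.-1 *+ n))) +
    (ww ^+ (p ^ N) - (1 + Mk * cc)) * (x + Mk) ^+ n).
  rewrite /RR /rr -/Mk.
  move: hM0; generalize (ww ^+ (p ^ N)) => W.
  generalize (x ^+ n.-1 *+ n) => C.
  generalize ((x + Mk) ^+ n) => Y.
  generalize (x ^+ n) => Xn.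
  move=> hM0; field.
  by [].
move: hE hF hY hn'; rewrite id.
generalize (ww ^+ (p ^ N) - (1 + Mk * cc)) => E.
generalize (x ^+ n.-1 *+ n) => C.
generalize ((x + Mk) ^+ n - x ^+ n - Mk * C) => F.
generalize ((x + Mk) ^+ n) => Y.
move=> hE hF hY hC.
set Bd := a Mk ^+ 2 * XX ^+ n.
have hX : 0 <= XX ^+ n by apply: exprn_ge0; apply: le_trans ler01 XX_ge1.
have hM2 : a Mk ^+ 2 <= a Mk by rewrite expr2 ler_piMl ?a_ge0.
have hin : a (F + Mk * cc * (Mk * C + F) + E * Y) <= Bd.
  have b0 : 0 <= Bd by apply: mulr_ge0 => //; apply: exprn_ge0; apply: a_ge0.
  apply: aDle; first apply: aDle => //.
    rewrite aM [a (Mk * cc)]aM.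
    have h1 : a (Mk * C + F) <= a Mk * XX ^+ n.
      apply: aDle; first by rewrite aM ler_wpM2l ?a_ge0.
      by apply: le_trans hF _; rewrite ler_wpM2r.
    have h2 := a_ge0 (Mk * C + F); have h3 := a_ge0 cc.
    rewrite /Bd expr2.
    apply: le_trans (_ : a Mk * 1 * (a Mk * XX ^+ n) <= _); last by rewrite mulr1 mulrA.
    apply: ler_pM; rewrite ?mulr_ge0 ?a_ge0 //.
    by apply: ler_wpM2l; rewrite ?a_ge0.
  rewrite aM /Bd; apply: ler_pM; rewrite ?a_ge0 //.
rewrite aM aV -aMk.
apply: le_trans (_ : (a Mk)^-1 * Bd <= _).
  by apply: ler_wpM2l; rewrite ?invr_ge0 ?a_ge0.
by rewrite /Bd expr2 -mulrA mulKf ?gt_eqF.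
Qed.

Lemma RR_cvg n : Kcvg a (fun N => RR N n) (rr n).
Proof.
apply: (Kcvg_dom (r := fun N => (p%:R^-1) ^+ N * XX ^+ n)); first by move=> k; apply: RR_bound.
move=> e e0.
have hX : 0 < XX ^+ n by apply: exprn_gt0; apply: lt_le_trans ltr01 XX_ge1.
have hp1 : 0 <= p%:R^-1 :> R by rewrite invr_ge0 ltW ?pR_gt0.
have hp2 : p%:R^-1 < 1 :> R by rewrite invf_lt1 ?pR_gt0 ?pR_gt1.
have [N hN] := geo_small hp1 hp2 (divr_gt0 e0 hX).
exists N => k hk; have := hN k hk.
by rewrite ltr_pdivlMr.
Qed.

Lemma main_x : (exists B, forall n, relE ww B n = rr n) /\
  (forall B, (forall n, relE ww B n = rr n) -> forall n, Kcvg a (fun N => SS N n) (B n)).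
Proof. exact: (rel_main SS_rel RR_cvg). Qed.

End X.

Lemma fact_neq0 n : (n`!)%:R != 0 :> K.
Proof. by rewrite nat_neq0 // fact_gt0. Qed.

Lemma den0 : bern_den a q h 0 = ww - 1.
Proof. by rewrite /bern_den fact0 divr1 qpow_h. Qed.
Lemma denS k : bern_den a q h k.+1 = ww / ((k.+1)`!)%:R.
Proof. by rewrite /bern_den subr0 qpow_h. Qed.

Lemma L1 (B : nat -> K) n :
  fps_mul (bern_den a q h) (fun n => B n / (n`!)%:R) n * (n`!)%:R = relE ww B n.
Proof.
rewrite /fps_mul mulr_suml big_ord_recl ext1 den0 subn0 -mulrA divfK ?fact_neq0 //.
congr (_ + _); rewrite mulr_sumr; apply: eq_bigr => i _.
rewrite lift0 denS.
have hi : (i.+1 <= n)%N by apply: ltn_ord.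
have hf := bin_fact hi.
have c0 : ('C(n, i.+1))%:R != 0 :> K by rewrite nat_neq0 // bin_gt0.
have f1 := fact_neq0 i.+1.
have f2 := fact_neq0 (n - i.+1).
have hf' : ('C(n, i.+1))%:R * (((i.+1)`!)%:R * ((n - i.+1)`!)%:R) = (n`!)%:R :> K.
  by rewrite -!natrM hf.
rewrite -hf' -[B (n - i.+1)%N *+ _]mulr_natr.
by field; rewrite f1 f2.
Qed.

Lemma num0 : bern_num a q h 0 = cc. Proof. by []. Qed.
Lemma num1 : bern_num a q h 1 = 1. Proof. by []. Qed.
Lemma numSS k : bern_num a q h k.+2 = 0. Proof. by []. Qed.

Lemma L2 x n : fps_mul (bern_num a q h) (exp_fps x) n * (n`!)%:R = rr x n.
Proof.
rewrite /fps_mul /rr /exp_fps.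
case: n => [|n].
  by rewrite big_ord1 num0 subnn expr0 mulr0n addr0 fact0 divr1 !mulr1.
rewrite 2!big_ord_recl big1 ?addr0; last first.
  by move=> i _; rewrite !lift0 numSS mul0r.
rewrite lift0 num0 num1 subn0 subn1 /= !mulrDl mul1r.
rewrite -mulrA divfK ?fact_neq0 //; congr (_ + _).
by rewrite factS natrM [_ * (n`!)%:R]mulrC mulrA divfK ?fact_neq0 // mulr_natr.
Qed.

Lemma L0 n : bern_num a q h n * (n`!)%:R = rr 0 n.
Proof.
rewrite /rr; case: n => [|[|n]].
- by rewrite num0 expr0 mulr0n addr0 fact0 !mulr1.
- by rewrite num1 mul1r expr1 mulr0 add0r expr0 factS fact0 muln1 mulr1n.
- by rewrite numSS mul0r !expr0n /= mulr0 mul0rn addr0.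
Qed.

End MainQ.
End Abs.

Theorem theorem1 (R : realType) (K : closedFieldType) (a : K -> R) (p : nat)
    (Hp : prime p) (Ha : is_padic_abs p a) (h : int) (q : K)
    (Hq : a (1 - q) ^+ (p.-1) < (p%:R)^-1) :
  ((exists B, is_hq_bernoulli a q h B) /\
   forall B, is_hq_bernoulli a q h B -> forall n : nat,
     Kcvg a (fun N => ((p ^ N)%:R)^-1 *
                      \sum_(y < p ^ N) Kqpow a q (h * y%:Z)%:~R * (y%:R) ^+ n) (B n))
  /\
  (forall x : K, in_Zp a x ->
   (exists B, is_hq_bernoulli_poly a q h x B) /\
   forall B, is_hq_bernoulli_poly a q h x B -> forall n : nat,
     Kcvg a (fun N => ((p ^ N)%:R)^-1 *
                      \sum_(y < p ^ N) Kqpow a q (h * y%:Z)%:~R * (x + y%:R) ^+ n) (B n)).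
Proof.
split.
  have [[B hB] hall] := main_x Hp Ha h Hq 0.
  split.
    exists B => n; apply: (mulIf (fact_neq0 Hp Ha n)).
    by rewrite (L1 Hp Ha) (L0 a q h) hB.
  move=> B' hB' n.
  have e : forall k, relE (ww a q h) B' k = rr a q h 0 k.
    by move=> k; rewrite -(L1 Hp Ha) -(L0 a q h) hB'.
  apply: (Kcvg_ext _ (hall B' e n)) => N.
  rewrite /SS; congr (_ * _); apply: eq_bigr => y _; by rewrite add0r.
move=> x _.
have [[B hB] hall] := main_x Hp Ha h Hq x.
split.
  exists B => n; apply: (mulIf (fact_neq0 Hp Ha n)).
  by rewrite (L1 Hp Ha) (L2 Hp Ha) hB.
move=> B' hB' n.
have e : forall k, relE (ww a q h) B' k = rr a q h x k.
  by move=> k; rewrite -(L1 Hp Ha) -(L2 Hp Ha) hB'.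
exact: (hall B' e n).
Qed.
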